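(* Let $\beta>0$, $\nu\in(1/3,1)$, $\mu_{\mathrm{pp},\gamma}=4(1-\gamma)$, $\mu_\gamma=2\gamma+\beta+2\sqrt{\gamma(\gamma+\beta)}$, $\mu=(1+\sqrt{1+\beta})^2$, $C=C(\beta)=-\frac12\big(2-2\sqrt{1+\beta}+\frac{\beta}{\sqrt{1+\beta}}\big)$ (which is positive), and $\varepsilon=Ct^{\nu-1}$. Then for $t$ large enough and all $\gamma\in[0,1-t^{\nu-1}(1+\beta/2)]$, $$\frac{(\mu_{\mathrm{pp},\gamma}+\mu_\gamma+\varepsilon-\mu)t}{t^{1/3}}\le -Ct^{\nu-1/3}.$$ *)

(* Defs.v *)
From Stdlib Require Import Reals.
Open Scope R_scope.

Definition mu_pp (gamma : R) : R := 4 * (1 - gamma).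

Definition mu_gamma (beta gamma : R) : R :=
  2 * gamma + beta + 2 * sqrt (gamma * (gamma + beta)).

Definition mu_full (beta : R) : R := (1 + sqrt (1 + beta)) ^ 2.

Definition Cconst (beta : R) : R :=
  - / 2 * (2 - 2 * sqrt (1 + beta) + beta / sqrt (1 + beta)).

Definition eps (beta nu t : R) : R := Cconst beta * Rpower t (nu - 1).

(* Main.v *)
Require Import Defs.
From Stdlib Require Import Reals Lra Psatz.
Open Scope R_scope.

Lemma key (beta gamma d : R) : 0 < beta -> 0 < d ->
  0 <= gamma <= 1 - d * (1 + beta / 2) ->
  mu_pp gamma + mu_gamma beta gamma + Cconst beta * d - mu_full beta
  <= - Cconst beta * d.
Proof.
  intros hb hd [g0 g1].
  unfold mu_pp, mu_gamma, mu_full, Cconst.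
  assert (hs : 0 < sqrt (1 + beta)) by (apply sqrt_lt_R0; lra).
  assert (hss : sqrt (1 + beta) * sqrt (1 + beta) = 1 + beta) by (apply sqrt_sqrt; lra).
  set (s := sqrt (1 + beta)) in *.
  assert (hq : 0 <= sqrt (gamma * (gamma + beta))) by apply sqrt_pos.
  assert (hqq : sqrt (gamma * (gamma + beta)) * sqrt (gamma * (gamma + beta)) = gamma * (gamma + beta))
    by (apply sqrt_sqrt; nra).
  set (q := sqrt (gamma * (gamma + beta))) in *.
  set (a := 1 - gamma).
  assert (ha : a >= d * (1 + beta / 2)) by (unfold a; lra).
  assert (ha1 : a <= 1) by (unfold a; lra).
  assert (hR : 0 <= 1 + beta - (1 + beta / 2) * a) by nra.
  assert (hsq : (s * q) * (s * q) <= (1 + beta - (1 + beta / 2) * a) * (1 + beta - (1 + beta / 2) * a)).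
  { replace ((s*q)*(s*q)) with ((s*s)*(q*q)) by ring. rewrite hss, hqq. unfold a. assert (0 <= (beta*(1-gamma))*(beta*(1-gamma))) by apply Rle_0_sqr. nra. }
  assert (hsq2 : s * q <= 1 + beta - (1 + beta / 2) * a).
  { assert (0 <= s*q) by nra. nra. }
  assert (hu : beta / s = beta * / s) by reflexivity.
  assert (hsu : s * / s = 1) by (field; lra).
  assert (hui : 0 < / s) by (apply Rinv_0_lt_compat; lra).
  set (u := / s) in *.
  rewrite hu.
  assert (main : s * (2 * a - 2 * s + 2 * q) <= s * (d * (2 - 2 * s + beta * u))).
  { assert (e : s * (d * (2 - 2 * s + beta * u)) = - d * (s - 1) * (s - 1)).
    { replace (s * (d * (2 - 2 * s + beta * u))) with (d * (2*s - 2*(s*s) + beta * (s*u))) by ring.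
      rewrite hss, hsu. nra. }
    rewrite e. assert (0 <= (a - d) * ((s - 1) * (s - 1))) by (apply Rmult_le_pos; [nra | apply Rle_0_sqr]). assert (a * (s * s) = a * (1 + beta)) by (rewrite hss; ring). assert (d * (s * s) = d * (1 + beta)) by (rewrite hss; ring). nra. }
  assert (m2 : 2 * a - 2 * s + 2 * q <= d * (2 - 2 * s + beta * u)).
  { apply Rmult_le_reg_l with s; lra. }
  unfold a in m2. assert (e2 : (1 + s) ^ 2 = 2 + beta + 2 * s) by (simpl; nra). rewrite e2. unfold a. lra.
Qed.

Theorem proposition3p13 (beta nu : R) (hbeta : 0 < beta)
  (hnu1 : 1 / 3 < nu) (hnu2 : nu < 1) :
  exists T : R, forall t : R, T <= t ->
    forall gamma : R,
      0 <= gamma <= 1 - Rpower t (nu - 1) * (1 + beta / 2) ->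
      (mu_pp gamma + mu_gamma beta gamma + eps beta nu t - mu_full beta) * t
        / Rpower t (1 / 3)
      <= - Cconst beta * Rpower t (nu - 1 / 3).
Proof.
  exists 1. intros t ht gamma hg.
  assert (htp : 0 < t) by lra.
  assert (hd : 0 < Rpower t (nu - 1)) by (unfold Rpower; apply exp_pos).
  assert (hP : 0 < Rpower t (1 / 3)) by (unfold Rpower; apply exp_pos).
  assert (hQ : Rpower t (nu - 1 / 3) * Rpower t (1 / 3) = Rpower t (nu - 1) * t).
  { rewrite <- Rpower_plus. rewrite <- (Rpower_1 t) at 3 by lra.
    rewrite <- Rpower_plus. f_equal. lra. }
  pose proof (key beta gamma (Rpower t (nu - 1)) hbeta hd hg) as K.
  unfold eps.
  apply (Rmult_le_reg_r (Rpower t (1 / 3))); [lra|].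
  assert (E : forall y, y / Rpower t (1/3) * Rpower t (1/3) = y) by (intro; field; lra).
  rewrite E, (Rmult_assoc (- Cconst beta)), hQ. nra.
Qed.
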